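(* Let $n\ge3$. For every $r\in[3,n]$, the ideal $\tilde{\mathfrak b}_r$ is an atom of $\mathrm{Mon}(R)$.
   Context: Let $K$ be a field, $N\ge2$, $R=K[X_1,\dots,X_N]$, $X=X_1$, $Y=X_2$. $\mathrm{Mon}(R)$ is the monoid of nonzero monomial ideals of $R$ under ideal multiplication, with identity $R$ (its only unit); an atom of $\mathrm{Mon}(R)$ is an $I\ne R$ in $\mathrm{Mon}(R)$ not a product of two elements of $\mathrm{Mon}(R)\setminus\{R\}$. $[x,y]=\{z\in\mathbb Z:x\le z\le y\}$. For $i\in\mathbb N^+$, $\mathfrak b_i=\langle X^i,Y^i\rangle$. Fix an integer $n\ge 3$ and positive integers $a_1,\dots,a_{n+1}$ with (C1) $a_{n+1}=a_1+\dots+a_{n-1}+2a_n$ and (C2) $a_{i+1}>2(a_1+\dots+a_i)$ for all $i\in[1,n-1]$. For $I\subseteq[1,n+1]$ put $a_I=\sum_{i\in I}a_i$ ($a_\emptyset=0$). For $r\in[3,n]$, $\tilde{\mathfrak b}_r$ is the ideal generated by $\mathfrak b_{a_1}\mathfrak b_{a_3}\mathfrak b_{a_4}\cdots\mathfrak b_{a_r}$ together with the monomial $X^{a_{[3,r]}-a_2}Y^{a_3-a_2}$. *)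

(* Defs.v *)
From HB Require Import structures.
From mathcomp Require Import all_boot all_order all_algebra.
From mathcomp Require Import mpoly.
Set Implicit Arguments. Unset Strict Implicit. Unset Printing Implicit Defensive.
Import GRing.Theory.
Local Open Scope ring_scope.

Section MonIdeals.
Variables (K : fieldType) (N : nat).
Notation R := {mpoly K[N]}.

Definition ideq (I J : R -> Prop) : Prop := forall p, I p <-> J p.

Definition gen_ideal (G : R -> Prop) : R -> Prop :=
  fun p => exists s : seq (R * R),
    (forall i, (i < size s)%N -> G (nth (0, 0) s i).2) /\ p = \sum_(x <- s) x.1 * x.2.

Definition whole : R -> Prop := fun _ => True.

Definition iprod (I J : R -> Prop) : R -> Prop :=
  gen_ideal (fun h => exists a b, I a /\ J b /\ h = a * b).

Definition monomial_ideal (I : R -> Prop) : Prop :=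
  exists S : 'X_{1..N} -> Prop,
    ideq I (gen_ideal (fun p => exists m, S m /\ p = 'X_[m])).

Definition nonzero_ideal (I : R -> Prop) : Prop := exists p, I p /\ p != 0.

Definition in_Mon (I : R -> Prop) : Prop := monomial_ideal I /\ nonzero_ideal I.

(* atoms of Mon(R): non-units (i.e. <> R) that are not products of two
   non-units of Mon(R) *)
Definition Mon_atom (I : R -> Prop) : Prop :=
  in_Mon I /\ ~ ideq I whole /\
  ~ (exists J1 J2, in_Mon J1 /\ ~ ideq J1 whole /\
                   in_Mon J2 /\ ~ ideq J2 whole /\ ideq I (iprod J1 J2)).

(* the variable X_(i+1) (0-indexed here); only used with i < N *)
Definition var (i : nat) : R :=
  match insub i with Some j => 'X_j | None => 0 end.

Definition Xv : R := var 0.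
Definition Yv : R := var 1.

Definition bideal (i : nat) : R -> Prop :=
  gen_ideal (fun p => p = Xv ^+ i \/ p = Yv ^+ i).

Definition iprod_list (l : seq (R -> Prop)) : R -> Prop := foldr iprod whole l.

(* tilde b_r, for a sequence a = (a_1, ..., a_{n+1}) given as a : nat -> nat *)
Definition btilde (a : nat -> nat) (r : nat) : R -> Prop :=
  gen_ideal (fun p =>
    iprod_list (bideal (a 1%N) :: [seq bideal (a i) | i <- iota 3 (r - 2)]) p
    \/ p = Xv ^+ ((\sum_(3 <= i < r.+1) a i) - a 2%N) * Yv ^+ (a 3%N - a 2%N)).

End MonIdeals.

(* Main.v *)
Require Import Defs.
From HB Require Import structures.
From mathcomp Require Import all_boot all_order all_algebra.
From mathcomp Require Import mpoly.
From mathcomp Require Import zify.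
Set Implicit Arguments. Unset Strict Implicit. Unset Printing Implicit Defensive.
Import GRing.Theory.

Section Gen.
Variables (K : fieldType) (N : nat).
Local Notation R := {mpoly K[N]}.
Local Notation M := 'X_{1..N}.
Local Open Scope ring_scope.

Definition Good (Q : M -> Prop) (p : R) := forall m, m \in msupp p -> Q m.
Definition upc (Q : M -> Prop) := forall m m', (m <= m')%MM -> Q m -> Q m'.

Lemma Good0 Q : Good Q 0.
Proof. by move=> m; have /eqP -> : msupp (0 : R) == [::] by rewrite msupp_eq0. Qed.

Lemma GoodD Q p q : Good Q p -> Good Q q -> Good Q (p + q).
Proof. by move=> hp hq m /msuppD_le; rewrite mem_cat => /orP [] ?; auto. Qed.

Lemma GoodM Q1 Q2 p q : Good Q1 p -> Good Q2 q ->
  Good (fun m => exists m1 m2, Q1 m1 /\ Q2 m2 /\ m = (m1 + m2)%MM) (p * q).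
Proof.
move=> hp hq m /msuppM_le /allpairsP [[m1 m2] /= [h1 h2 ->]].
by exists m1, m2; split; [apply: hp|split; [apply: hq|]].
Qed.

Lemma GoodMl Q p q : upc Q -> Good Q q -> Good Q (p * q).
Proof.
move=> uQ hq m hm.
have [m1 [m2 [_ [h2 ->]]]] := GoodM (Q1 := fun _ => True) (fun _ _ => I) hq hm.
by apply: uQ h2; apply: lem_addl.
Qed.

Lemma Good_gen G Q p : upc Q -> (forall g, G g -> Good Q g) -> gen_ideal G p -> Good Q p.
Proof.
move=> uQ hG [s [hs ->]]; elim: s hs => [|x s IH] hs.
  by rewrite big_nil; apply: Good0.
rewrite big_cons; apply: GoodD.
  by apply: GoodMl => //; apply: hG; apply: (hs 0%N).
by apply: IH => i hi; apply: (hs i.+1).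
Qed.

Lemma Good_X (Q : M -> Prop) m : Q m -> Good Q 'X_[m].
Proof. by move=> h m' /mem_msuppXP <-. Qed.

Lemma Good_Xinv (Q : M -> Prop) m : Good Q 'X_[m] -> Q m.
Proof. by apply; rewrite msuppX mem_seq1. Qed.

Lemma Good_mono (Q Q' : M -> Prop) p : (forall m, Q m -> Q' m) -> Good Q p -> Good Q' p.
Proof. by move=> h hp m /hp /h. Qed.

Lemma gen_idealI (G : R -> Prop) s : (forall x, x \in s -> G x.2) ->
  gen_ideal G (\sum_(x <- s) x.1 * x.2).
Proof. by move=> h; exists s; split => // i hi; apply: h; apply: mem_nth. Qed.

Lemma gen_ideal_gen (G : R -> Prop) g : G g -> gen_ideal G g.
Proof.
move=> h; have -> : g = \sum_(x <- [:: (1 : R, g)]) x.1 * x.2.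
  by rewrite big_cons big_nil mul1r addr0.
by apply: gen_idealI => x; rewrite mem_seq1 => /eqP ->.
Qed.

Lemma gen_ideal_add (G : R -> Prop) p q : gen_ideal G p -> gen_ideal G q -> gen_ideal G (p + q).
Proof.
move=> [s [hs ->]] [t [ht ->]]; exists (s ++ t); split; last by rewrite big_cat.
move=> i; rewrite size_cat nth_cat; case: ifP => h1 h2; first by apply: hs.
apply: ht; move/negbT: h1; rewrite -leqNgt => h1; rewrite ltn_subLR. exact: h2. exact: h1.
Qed.

Lemma gen_ideal_mull (G : R -> Prop) c p : gen_ideal G p -> gen_ideal G (c * p).
Proof.
move=> [s [hs ->]]; exists [seq (c * x.1, x.2) | x <- s]; split.
  move=> i; rewrite size_map => hi; rewrite (nth_map (0, 0)) //=; exact: hs.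
by rewrite big_map mulr_sumr; apply: eq_bigr => x _ /=; rewrite mulrA.
Qed.

Lemma gen_ideal0 (G : R -> Prop) : gen_ideal G 0.
Proof. by exists [::]; split => //; rewrite big_nil. Qed.

Lemma gen_ideal_sub (G G' : R -> Prop) p : (forall g, G g -> gen_ideal G' g) ->
  gen_ideal G p -> gen_ideal G' p.
Proof.
move=> hG [s [hs ->]]; elim: s hs => [|x s IH] hs; first by rewrite big_nil; apply: gen_ideal0.
rewrite big_cons; apply: gen_ideal_add; last by apply: IH => i hi; apply: (hs i.+1).
by apply: gen_ideal_mull; apply: hG; apply: (hs 0%N).
Qed.

Definition monos (S : M -> Prop) : R -> Prop := fun p => exists m, S m /\ p = 'X_[m].

Lemma monomial_Good (J : R -> Prop) S p : ideq J (gen_ideal (monos S)) -> J p ->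
  Good (fun m => J 'X_[m]) p.
Proof.
move=> hJ /hJ hp; apply: Good_gen hp.
  move=> m m' le /hJ hm; apply/hJ.
  by rewrite -(submK le) mpolyXD; apply: gen_ideal_mull.
move=> g [m [Sm ->]]; apply: Good_X; apply/hJ; apply: gen_ideal_gen; by exists m.
Qed.

Lemma whole_of_one (J : R -> Prop) G : ideq J (gen_ideal G) -> J 'X_[0] -> ideq J (@whole K N).
Proof.
move=> hJ /hJ h1 p; split => // _; apply/hJ.
by rewrite -[p]mulr1 -mpolyX0; apply: gen_ideal_mull.
Qed.

Lemma iprod_X (J1 J2 : R -> Prop) u v : J1 'X_[u] -> J2 'X_[v] -> iprod J1 J2 'X_[u + v].
Proof. by move=> h1 h2; apply: gen_ideal_gen; exists 'X_[u], 'X_[v]; rewrite mpolyXD. Qed.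

Lemma iprod_Good (J1 J2 : R -> Prop) S1 S2 p :
  ideq J1 (gen_ideal (monos S1)) -> ideq J2 (gen_ideal (monos S2)) -> iprod J1 J2 p ->
  Good (fun m => exists u v, J1 'X_[u] /\ J2 'X_[v] /\ (u + v <= m)%MM) p.
Proof.
move=> h1 h2; apply: Good_gen.
  move=> m m' le [u [v [? [? le']]]]; exists u, v; do 2!split => //.
  exact: lepm_trans le' le.
move=> g [x [y [/(monomial_Good h1) hx [/(monomial_Good h2) hy ->]]]].
apply: Good_mono (GoodM hx hy) => m [m1 [m2 [? [? ->]]]].
by exists m1, m2; do 2!split => //; apply: lepm_refl.
Qed.

Lemma Good_gen_monos (Q : M -> Prop) p : Good Q p -> gen_ideal (monos Q) p.
Proof.
move=> h; rewrite (mpolyE p).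
have -> : \sum_(m <- msupp p) p@_m *: 'X_[m] =
   \sum_(x <- [seq ((p@_m)%:MP, 'X_[m]) | m <- msupp p]) x.1 * x.2 :> R.
  by rewrite [in RHS]big_map; apply: eq_bigr => m _ /=; rewrite mul_mpolyC.
apply: gen_idealI => x /mapP [m hm ->] /=; exists m; split => //; exact: h.
Qed.

Lemma mpolyX_neq0 m : ('X_[m] : R) != 0.
Proof. by rewrite -msupp_eq0 msuppX. Qed.

End Gen.

Fixpoint ss (l : seq nat) : seq nat :=
  if l is c :: l' then ss l' ++ [seq (x + c)%N | x <- ss l'] else [:: 0%N].

Lemma mem_ss_cons s c l : s \in ss (c :: l) <-> s \in ss l \/ exists x, x \in ss l /\ s = (x + c)%N.
Proof.
rewrite /= mem_cat; split.
  by case/orP => [h|/mapP [x hx ->]]; [left|right; exists x].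
by case => [->//|[x [hx ->]]]; apply/orP; right; apply/mapP; exists x.
Qed.

Lemma ss0 l : 0%N \in ss l.
Proof. by elim: l => [|c l IH] //; apply/mem_ss_cons; left. Qed.

Lemma ss_sum l : sumn l \in ss l.
Proof. elim: l => [|c l IH] //=; apply/mem_ss_cons; right; exists (sumn l); split => //; lia. Qed.

Lemma ss_le l s : s \in ss l -> (s <= sumn l)%N.
Proof.
elim: l s => [|c l IH] s; first by rewrite inE => /eqP ->.
case/(mem_ss_cons _ _ _).1 => [/IH|[x [/IH hx ->]]] /=; lia.
Qed.

Lemma ss_rcons l c s : s \in ss (l ++ [:: c]) -> s \in ss l \/ exists x, x \in ss l /\ s = (x + c)%N.
Proof.
elim: l s => [|d l IH] s.
  by case/(mem_ss_cons _ _ _).1 => [|[x [hx ->]]]; [left|right; exists x].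
case/(mem_ss_cons _ _ _).1 => [/IH [h|[x [hx ->]]]|[y [/IH [h|[x [hx ->]]] ->]]].
- by left; apply/mem_ss_cons; left.
- by right; exists x; split => //; apply/mem_ss_cons; left.
- by left; apply/mem_ss_cons; right; exists y.
- right; exists (x + d)%N; split; last lia.
  by apply/mem_ss_cons; right; exists x.
Qed.

Section Spec.
Variables (K : fieldType) (N : nat) (hN : (2 <= N)%N).
Local Notation R := {mpoly K[N]}.
Local Notation M := 'X_{1..N}.
Local Open Scope ring_scope.

Definition i0 : 'I_N := Ordinal (leq_trans (isT : (0 < 2)%N) hN).
Definition i1 : 'I_N := Ordinal hN.

Lemma var_E (j : 'I_N) : var K N j = 'X_j.
Proof.
rewrite /var; case: insubP => [k _ hk|]; last by rewrite ltn_ord.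
by have -> : k = j by apply: val_inj.
Qed.

Lemma XvE : Xv K N = 'X_i0. Proof. exact: (var_E i0). Qed.
Lemma YvE : Yv K N = 'X_i1. Proof. exact: (var_E i1). Qed.

Definition mon (x y : nat) : M := (U_(i0) *+ x + U_(i1) *+ y)%MM.

Lemma monE x y i : mon x y i = (x * (i0 == i) + y * (i1 == i))%N.
Proof. by rewrite mnmDE !mulmnE !mnm1E mulnC [(y * _)%N]mulnC. Qed.

Lemma mon0 x y : mon x y i0 = x. Proof. by rewrite monE eqxx /=; lia. Qed.
Lemma mon1 x y : mon x y i1 = y. Proof. by rewrite monE eqxx /=; lia. Qed.

Lemma XYmon x y : Xv K N ^+ x * Yv K N ^+ y = 'X_[mon x y].
Proof. by rewrite XvE YvE !mpolyXn -mpolyXD. Qed.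

Lemma mon_le x y (m : M) : (x <= m i0)%N -> (y <= m i1)%N -> (mon x y <= m)%MM.
Proof.
move=> h1 h2; apply/mnm_lepP => i; rewrite monE.
case: (eqVneq i0 i) => [e0|ne0]; case: (eqVneq i1 i) => [e1|ne1] /=.
- by have : i0 = i1 by rewrite e0 e1. 
- rewrite -e0; lia.
- rewrite -e1; lia.
- lia.
Qed.

Lemma le_mon (u : M) x y : (u <= mon x y)%MM ->
  [/\ (u i0 <= x)%N, (u i1 <= y)%N & forall i, i != i0 -> i != i1 -> u i = 0%N].
Proof.
move/mnm_lepP => h; split; first by move: (h i0); rewrite mon0.
  by move: (h i1); rewrite mon1.
move=> i n0 n1; move: (h i); rewrite monE eq_sym (negbTE n0) eq_sym (negbTE n1); lia.
Qed.

Definition QL (l : seq nat) (m : M) : Prop :=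
  exists s, s \in ss l /\ (s <= m i1)%N /\ (sumn l - s <= m i0)%N.

Lemma upc_QL l : upc (QL l).
Proof.
move=> m m' /mnm_lepP le [s [hs [h1 h2]]]; exists s; split => //.
by split; [exact: (leq_trans h1 (le i1))|exact: (leq_trans h2 (le i0))].
Qed.

Lemma bideal_Good c p : bideal c p -> @Good K N (fun m : M => (c <= m i0)%N \/ (c <= m i1)%N) p.
Proof.
apply: Good_gen.
  move=> m m' /mnm_lepP le [h|h]; [left; exact: (leq_trans h (le i0))|right; exact: (leq_trans h (le i1))].
move=> g [->|->].
  by rewrite -(mulr1 (_ ^+ c)) -(expr0 (Yv K N)) XYmon; apply: Good_X; left; rewrite mon0.
by rewrite -(mul1r (_ ^+ c)) -(expr0 (Xv K N)) XYmon; apply: Good_X; right; rewrite mon1.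
Qed.

Lemma iprod_list_Good l p : iprod_list (map (@bideal K N) l) p -> @Good K N (QL l) p.
Proof.
elim: l p => [|c l IH] p /=.
  by move=> _ m _; exists 0%N; split => //.
apply: Good_gen; first exact: upc_QL.
move=> g [x [y [/bideal_Good hx [/IH hy ->]]]].
apply: Good_mono (GoodM hx hy) => m [m1 [m2 [h1 [[s [hs [s1 s2]]] ->]]]].
rewrite /QL !mnmDE /=.
case: h1 => h1.
  exists s; split; first by apply/mem_ss_cons; left.
  have := ss_le hs; lia.
exists (s + c)%N; split; first by apply/mem_ss_cons; right; exists s.
have := ss_le hs; lia.
Qed.

Lemma iprod_list_mem l s : s \in ss l ->
  iprod_list (map (@bideal K N) l) 'X_[mon (sumn l - s) s].
Proof.
elim: l s => [|c l IH] s; first by [].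
rewrite /=; case/(mem_ss_cons _ _ _).1 => [hs|[x [hx ->]]].
  have -> : mon (c + sumn l - s) s = (mon c 0 + mon (sumn l - s) s)%MM.
    apply/mnmP => i; rewrite mnmDE !monE; have := ss_le hs; lia.
  apply: iprod_X; last exact: IH.
  by apply: gen_ideal_gen; left; rewrite -XYmon expr0 mulr1.
have -> : mon (c + sumn l - (x + c)) (x + c) = (mon 0 c + mon (sumn l - x) x)%MM.
  apply/mnmP => i; rewrite mnmDE !monE; have := ss_le hx; lia.
apply: iprod_X; last exact: IH.
by apply: gen_ideal_gen; right; rewrite -XYmon expr0 mul1r.
Qed.

End Spec.

Section Arith.
Variables (n : nat) (a : nat -> nat).
Hypothesis hn : (3 <= n)%N.
Hypothesis hpos : forall i, (1 <= i <= n.+1)%N -> (0 < a i)%N.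
Hypothesis C2 : forall i, (1 <= i <= n.-1)%N -> (2 * (\sum_(1 <= j < i.+1) a j) < a i.+1)%N.

Definition Lk k := a 1 :: map a (iota 3 (k - 2)).

Lemma Lk_succ k : (2 <= k)%N -> Lk k.+1 = Lk k ++ [:: a k.+1].
Proof.
move=> hk; rewrite /Lk (_ : (k.+1 - 2 = (k - 2) + 1)%N); last lia.
rewrite iotaD map_cat /= (_ : (3 + (k - 2) = k.+1)%N) //; lia.
Qed.

Lemma sumLk k : (2 <= k)%N -> (sumn (Lk k) + a 2 = \sum_(1 <= j < k.+1) a j)%N.
Proof.
elim: k => [|k IH] // hk; case: (leqP k 1) => hk1.
  have -> : k = 1%N by lia.
  by rewrite /Lk /= /index_iota /= !big_cons big_nil; lia.
rewrite Lk_succ // sumn_cat big_nat_recr /=; last lia.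
rewrite -IH // /Lk /=; lia.
Qed.

Lemma a3_le k : (3 <= k)%N -> (a 3 <= sumn (Lk k))%N.
Proof.
elim: k => [|k IH] // hk; case: (leqP k 2) => hk1.
  have -> : k = 2%N by lia.
  rewrite /Lk /=; lia.
rewrite Lk_succ; last lia.
rewrite sumn_cat; have := IH hk1; rewrite /Lk /=; lia.
Qed.

Lemma a12 : (2 * a 1 < a 2)%N.
Proof.
have := C2 (i := 1); rewrite /index_iota /= big_cons big_nil; move=> h.
have : (0 < n.-1)%N by lia.
move/h; lia.
Qed.

Lemma a123 : (2 * (a 1 + a 2) < a 3)%N.
Proof.
have := C2 (i := 2); rewrite /index_iota /= !big_cons big_nil; move=> h.
have : (1 <= 2 <= n.-1)%N by apply/andP; split => //; lia.
move/h; lia.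
Qed.

Lemma Diff k : (2 <= k <= n)%N -> forall s t, s \in ss (Lk k) -> t \in ss (Lk k) ->
  (t <= s)%N -> (s <= t + a 1)%N \/ (a 3 + t <= s + a 1)%N.
Proof.
elim: k => [|k IH] //; case: (leqP k 1) => hk1 /andP [hk2 hkn].
  have -> : k = 1%N by lia.
  move=> s t; rewrite /Lk /= !inE => /orP [] /eqP -> /orP [] /eqP ->; lia.
have IH' := IH ltac:(apply/andP; split; lia).
have hC : (2 * (\sum_(1 <= j < k.+1) a j) < a k.+1)%N.
  by apply: C2; apply/andP; split; lia.
rewrite -sumLk in hC; last lia.
have F : (a 3 + sumn (Lk k) <= a k.+1 + a 1)%N.
  case: (leqP k 2) => hk3.
    have ek : k = 2%N by lia.
    by rewrite ek /Lk /=; lia.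
  have := a3_le hk3; lia.
rewrite Lk_succ; last lia.
move=> s t /ss_rcons [hs|[s0 [hs ->]]] /ss_rcons [ht|[t0 [ht ->]]] hts.
- exact: IH'.
- have := ss_le hs; lia.
- have := ss_le ht; lia.
- have [|h|h] := IH' s0 t0 hs ht; [lia|left; lia|right; lia].
Qed.

End Arith.

Lemma core (Q P1 P2 : nat -> nat -> Prop) (Sig : nat -> Prop) (D a1 a2 a3 : nat)
  (HQ : forall x y x' y', P1 x y -> P2 x' y' -> Q (x + x')%N (y + y')%N)
  (I2 : forall x y, Q x y -> (D <= x + y)%N)
  (I3 : forall x y, Q x y -> (y < a3 - a2)%N -> (D <= x + a1)%N)
  (I4 : forall x y, Q x y -> (x + y = D)%N -> Sig y)
  (I5 : forall t x y, Sig t -> (0 < t)%N -> Q x y -> (y <= a3 - a2 + t)%N ->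
          (x + t + a1 + a2 <= D)%N -> False)
  (h12 : (2 * a1 < a2)%N) (h23 : (a2 < a3)%N)
  (hX : exists p1 p2, [/\ P1 p1 0%N, P2 p2 0%N, (0 < p1)%N, (0 < p2)%N & (p1 + p2 <= D)%N])
  (hY : exists q1 q2, [/\ P1 0%N q1, P2 0%N q2 & (q1 + q2 <= D)%N])
  (hE : exists x1 y1 x2 y2, [/\ P1 x1 y1, P2 x2 y2, (x1 + x2 + a1 + a2 <= D)%N
                             & (y1 + y2 <= a3 - a2)%N]) : False.
Proof.
case: hX => p1 [p2 [Xp1 Xp2 hp1 hp2 hp]].
case: hY => q1 [q2 [Yq1 Yq2 hq]].
case: hE => x1 [y1 [x2 [y2 [E1 E2 hx hy]]]].
have A := I2 _ _ (HQ _ _ _ _ Xp1 Yq2).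
have B := I2 _ _ (HQ _ _ _ _ Yq1 Xp2).
have W1 := HQ _ _ _ _ E1 Xp2.
have W2 := HQ _ _ _ _ Xp1 E2.
case: (ltnP y1 (a3 - a2)) => c1; case: (ltnP y2 (a3 - a2)) => c2.
- have := I3 _ _ W1; rewrite addn0 => /(_ c1).
  have := I3 _ _ W2; rewrite add0n => /(_ c2).
  lia.
- have ey1 : y1 = 0%N by lia.
  have := I2 _ _ W1; rewrite ey1 => h1.
  have S1 : Sig q1.
    by have := I4 _ _ (HQ _ _ _ _ Yq1 Xp2); rewrite add0n addn0; apply; lia.
  apply: (I5 _ _ _ S1 _ (HQ _ _ _ _ Yq1 E2)); lia.
- have ey2 : y2 = 0%N by lia.
  have := I2 _ _ W2; rewrite ey2 => h2.
  have S2 : Sig q2.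
    by have := I4 _ _ (HQ _ _ _ _ Xp1 Yq2); rewrite add0n addn0; apply; lia.
  apply: (I5 _ _ _ S2 _ (HQ _ _ _ _ E1 Yq2)); lia.
- lia.
Qed.

Section QIs.
Variables (n : nat) (a : nat -> nat) (r : nat).
Hypothesis hn : (3 <= n)%N.
Hypothesis hpos : forall i, (1 <= i <= n.+1)%N -> (0 < a i)%N.
Hypothesis C2 : forall i, (1 <= i <= n.-1)%N -> (2 * (\sum_(1 <= j < i.+1) a j) < a i.+1)%N.
Hypothesis hr : (3 <= r <= n)%N.

Definition DD := sumn (Lk a r).
Definition TT := (\sum_(3 <= i < r.+1) a i)%N.

Lemma DT : DD = (a 1 + TT)%N.
Proof.
rewrite /DD /TT /Lk /= sumnE big_map /index_iota (_ : (r.+1 - 3 = r - 2)%N) //; lia.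
Qed.

Lemma hT : (a 3 <= TT)%N.
Proof. rewrite /TT big_ltn; lia. Qed.

Definition QI (x y : nat) : Prop :=
  (exists s, s \in ss (Lk a r) /\ (s <= y)%N /\ (DD - s <= x)%N) \/
  (TT - a 2 <= x /\ a 3 - a 2 <= y)%N.

Lemma ha1 : (0 < a 1)%N. Proof. by apply: hpos; lia. Qed.

Lemma QI2 x y : QI x y -> (DD <= x + y)%N.
Proof.
move=> hq; have h1 := a123 hn C2; have h2 := hT; have h3 := DT.
case: hq => [[s [hs [h4 h5]]]|[h4 h5]]; last lia.
have := ss_le hs; rewrite -/DD; lia.
Qed.

Lemma Diffr s t : s \in ss (Lk a r) -> t \in ss (Lk a r) ->
  (t <= s)%N -> (s <= t + a 1)%N \/ (a 3 + t <= s + a 1)%N.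
Proof. apply: (Diff hn C2); lia. Qed.

Lemma QI3 x y : QI x y -> (y < a 3 - a 2)%N -> (DD <= x + a 1)%N.
Proof.
move=> hq hy; have h1 := a123 hn C2; have h2 := a12 hn C2.
case: hq => [[s [hs [h4 h5]]]|[h4 h5]]; last lia.
have := Diffr hs (ss0 _) (leq0n s); have := ss_le hs; rewrite -/DD; lia.
Qed.

Lemma QI4 x y : QI x y -> (x + y = DD)%N -> y \in ss (Lk a r).
Proof.
move=> hq he; have h1 := a123 hn C2; have h2 := hT; have h3 := DT.
case: hq => [[s [hs [h4 h5]]]|[h4 h5]]; last lia.
have := ss_le hs; rewrite -/DD => h7.
by have -> : y = s by lia.
Qed.

Lemma QI5 t x y : t \in ss (Lk a r) -> (0 < t)%N -> QI x y -> (y <= a 3 - a 2 + t)%N ->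
  (x + t + a 1 + a 2 <= DD)%N -> False.
Proof.
move=> ht t0 hq h7 h8.
have h0 := a123 hn C2; have h1 := a12 hn C2; have h2 := hT; have h3 := DT; have h4 := ha1.
case: hq => [[s [hs [h5 h6]]]|[h5 h6]]; last lia.
have := ss_le hs; rewrite -/DD => h9.
have := Diffr hs ht; lia.
Qed.

End QIs.

Section Fin.
Variables (K : fieldType) (N : nat) (hN : (2 <= N)%N).
Variables (n : nat) (a : nat -> nat) (r : nat).
Hypothesis hn : (3 <= n)%N.
Hypothesis hpos : forall i, (1 <= i <= n.+1)%N -> (0 < a i)%N.
Hypothesis C2 : forall i, (1 <= i <= n.-1)%N -> (2 * (\sum_(1 <= j < i.+1) a j) < a i.+1)%N.
Hypothesis hr : (3 <= r <= n)%N.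
Local Notation R := {mpoly K[N]}.
Local Notation M := 'X_{1..N}.
Local Notation j0 := (i0 hN).
Local Notation j1 := (i1 hN).
Local Notation mn := (mon hN).
Local Open Scope ring_scope.

Definition QIm (m : M) : Prop := QI a r (m j0) (m j1).

Lemma upc_QIm : upc QIm.
Proof.
move=> m m' /mnm_lepP le [[s [hs [h1 h2]]]|[h1 h2]].
  left; exists s; split => //; split; [exact: (leq_trans h1 (le j1))|exact: (leq_trans h2 (le j0))].
by right; split; [exact: (leq_trans h1 (le j0))|exact: (leq_trans h2 (le j1))].
Qed.

Lemma btilde_list : (bideal (a 1%N) :: [seq bideal (a i) | i <- iota 3 (r - 2)])
   = map (@bideal K N) (Lk a r).
Proof. by rewrite /Lk /= -map_comp. Qed.

Lemma E_mon : Xv K N ^+ ((\sum_(3 <= i < r.+1) a i) - a 2%N) * Yv K N ^+ (a 3%N - a 2%N)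
   = 'X_[mn (TT a r - a 2) (a 3 - a 2)].
Proof. exact: XYmon. Qed.

Lemma btilde_Good p : @btilde K N a r p -> @Good K N QIm p.
Proof.
apply: Good_gen; first exact: upc_QIm.
move=> g [|->].
  rewrite btilde_list => /(@iprod_list_Good K N hN) h.
  by apply: (Good_mono _ h) => m [s hs]; left; exists s.
rewrite E_mon; apply: Good_X; right; rewrite mon0 mon1; split => //.
Qed.

Lemma btilde_mem m : QIm m -> @btilde K N a r 'X_[m].
Proof.
move=> h; have : exists m0, (m0 <= m)%MM /\ @btilde K N a r 'X_[m0].
  case: h => [[s [hs [h1 h2]]]|[h1 h2]].
    exists (mn (sumn (Lk a r) - s) s); split; first exact: mon_le.
    apply: gen_ideal_gen; left; rewrite btilde_list; exact: iprod_list_mem.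
  exists (mn (TT a r - a 2) (a 3 - a 2)); split; first exact: mon_le.
  by apply: gen_ideal_gen; right; rewrite E_mon.
case=> m0 [le h0]; rewrite -(submK le) mpolyXD; exact: gen_ideal_mull.
Qed.

Lemma mon_zero (u : M) : (forall i, i != j0 -> i != j1 -> u i = 0%N) -> u j0 = 0%N -> u j1 = 0%N ->
  u = 0%MM.
Proof.
move=> h h0 h1; apply/mnmP => i; rewrite mnm0E.
case: (eqVneq i j0) => [->//|n0]; case: (eqVneq i j1) => [->//|n1]; exact: h.
Qed.

Lemma le_mon_sum (u v : M) x y : (u + v <= mn x y)%MM ->
  [/\ (u j0 + v j0 <= x)%N, (u j1 + v j1 <= y)%N,
      (forall i, i != j0 -> i != j1 -> u i = 0%N) & (forall i, i != j0 -> i != j1 -> v i = 0%N)].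
Proof.
case/le_mon; rewrite !mnmDE => h0 h1 h; split => // i n0 n1; have := h i n0 n1; rewrite mnmDE; lia.
Qed.

Lemma main : Mon_atom (@btilde K N a r).
Proof.
have hD : (0 < DD a r)%N by rewrite (DT a r); have := ha1 hn hpos hr; lia.
split; [split|split].
- exists QIm => p; split; first by move/btilde_Good/Good_gen_monos.
  by apply: gen_ideal_sub => g [m [hm ->]]; exact: btilde_mem.
- exists 'X_[mn (TT a r - a 2) (a 3 - a 2)]; split; last exact: mpolyX_neq0.
  by apply: gen_ideal_gen; right; rewrite E_mon.
- move=> hw; have := (hw 'X_[0%MM]).2 I; rewrite -/(@btilde K N a r _).
  move/btilde_Good/Good_Xinv; rewrite /QIm !mnm0E => /(QI2 hn C2 hr); lia.
move=> [J1 [J2 [[[S1 hS1] _] [nw1 [[[S2 hS2] _] [nw2 hI]]]]]].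
have Fprod : forall m, @btilde K N a r 'X_[m] ->
    exists u v, J1 'X_[u] /\ J2 'X_[v] /\ (u + v <= m)%MM.
  by move=> m /hI h; exact: (Good_Xinv (iprod_Good hS1 hS2 h)).
have Fback : forall u v, J1 'X_[u] -> J2 'X_[v] -> QIm (u + v)%MM.
  move=> u v hu hv; have := iprod_X hu hv; move/hI/btilde_Good; exact: Good_Xinv.
have nz1 : forall u, J1 'X_[u] -> u <> 0%MM.
  by move=> u hu e; apply: nw1; apply: (whole_of_one hS1); rewrite -e.
have nz2 : forall u, J2 'X_[u] -> u <> 0%MM.
  by move=> u hu e; apply: nw2; apply: (whole_of_one hS2); rewrite -e.
have h23 : (a 2 < a 3)%N by have := a123 hn C2; lia.
apply: (@core (QI a r) (fun x y => exists u, J1 'X_[u] /\ u j0 = x /\ u j1 = y)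
   (fun x y => exists u, J2 'X_[u] /\ u j0 = x /\ u j1 = y)
   (fun y => y \in ss (Lk a r)) (DD a r) (a 1) (a 2) (a 3)).
- move=> x y x' y' [u [hu [<- <-]]] [v [hv [<- <-]]].
  by have := Fback u v hu hv; rewrite /QIm !mnmDE.
- exact: (QI2 hn C2 hr).
- exact: (QI3 hn C2 hr).
- exact: (QI4 hn C2 hr).
- move=> t x y ht t0 hq; exact: (QI5 hn hpos C2 hr ht t0 hq).
- exact: a12 hn C2.
- exact: h23.
- have q : QIm (mn (DD a r) 0).
    by left; exists 0%N; split; [exact: ss0|rewrite mon0 mon1 subn0].
  have [u [v [hu [hv le]]]] := Fprod _ (btilde_mem q).
  case/le_mon_sum: le => h0 h1 hu0 hv0.
  exists (u j0), (v j0); split.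
  + by exists u; split => //; split => //; lia.
  + by exists v; split => //; split => //; lia.
  + case: (posnP (u j0)) => // e; exfalso; apply: (nz1 u hu); apply: mon_zero => //; lia.
  + case: (posnP (v j0)) => // e; exfalso; apply: (nz2 v hv); apply: mon_zero => //; lia.
  + exact: h0.
- have q : QIm (mn 0 (DD a r)).
    by left; exists (DD a r); split; [exact: ss_sum|rewrite mon0 mon1 subnn].
  have [u [v [hu [hv le]]]] := Fprod _ (btilde_mem q).
  case/le_mon_sum: le => h0 h1 hu0 hv0.
  exists (u j1), (v j1); split => //.
  + by exists u; split => //; split => //; lia.
  + by exists v; split => //; split => //; lia.
- have q : QIm (mn (TT a r - a 2) (a 3 - a 2)).
    by right; rewrite mon0 mon1.
  have [u [v [hu [hv le]]]] := Fprod _ (btilde_mem q).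
  case/le_mon_sum: le => h0 h1 hu0 hv0.
  exists (u j0), (u j1), (v j0), (v j1); split.
  + by exists u.
  + by exists v.
  + have := DT a r; have := hT a hn hr; lia.
  + exact: h1.
Qed.

End Fin.

Theorem theorem4p7 (K : fieldType) (N : nat) (hN : (2 <= N)%N)
  (n : nat) (hn : (3 <= n)%N) (a : nat -> nat)
  (hpos : forall i, (1 <= i <= n.+1)%N -> (0 < a i)%N)
  (C1 : a n.+1 = ((\sum_(1 <= i < n) a i) + 2 * a n)%N)
  (C2 : forall i, (1 <= i <= n.-1)%N -> (2 * (\sum_(1 <= j < i.+1) a j) < a i.+1)%N)
  (r : nat) (hr : (3 <= r <= n)%N) :
  @Mon_atom K N (@btilde K N a r).
Proof. exact: (main K hN hn hpos C2 hr). Qed.
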